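(* The set consisting of the NOR gate and fanout gates (with any number of outputs) parsimoniously simulates, via planar simulations, each of the OR gate, the AND gate, and the crossover.
   Context: A gadget consists of a finite set of ports, equipped with a cyclic order, and a constraint, which is a set of subsets of the ports. A network of gadgets from $S$ is a finite undirected multigraph whose vertices are labeled by gadgets from $S$, each vertex's edge incidences being in bijection with the ports of its label. An assignment orients every edge; a vertex is satisfied if the set of its ports whose edges point into it belongs to its constraint. A simulation using gadgets from $S$ is a network of gadgets from $S$ that may additionally have dangling edges, each incident to only one vertex (equivalently, an extra outside-world vertex whose constraint contains every subset). It is planar if the graph including the outside world has a planar embedding respecting the port cyclic orders; the simulated gadget's ports are then the dangling edges in their order around the simulation. The simulated gadget's constraint consists of each set $D$ of dangling edges such that some assignment satisfying every non-outside-world vertex makes exactly the dangling edges in $D$ point into the simulation. A simulation is parsimonious if for each set in the simulated gadget's constraint there is exactly one such satisfying assignment realizing it; $S$ parsimoniously simulates $G$ if some parsimonious simulation using gadgets from $S$ has simulated gadget $G$. Gadgets: NOR gate: ports $a,b,c$, constraint $\{\emptyset,\{a,c\},\{b,c\},\{a,b,c\}\}$. $k$-way fanout gate: ports $a,c_1,\dots,c_k$, constraint $\{\{a\},\{c_1,\dots,c_k\}\}$. OR gate: ports $a,b,c$, constraint $\{\{c\},\{a\},\{b\},\{a,b\}\}$. AND gate: ports $a,b,c$, constraint $\{\{c\},\{a,c\},\{b,c\},\{a,b\}\}$. Crossover: ports $a_1,b_1,a_2,b_2$ in this cyclic order, constraint $\{\{a_1,b_1\},\{a_2,b_1\},\{a_1,b_2\},\{a_2,b_2\}\}$.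 *)

(* Defs.v *)
From mathcomp Require Import all_boot.
Set Implicit Arguments. Unset Strict Implicit. Unset Printing Implicit Defensive.

(* A gadget: ports are 'I_nports, the cyclic order being 0,1,...,nports-1
   (successor ordS); the constraint is a set of subsets of the ports. *)
Record gadget := Gadget {
  nports : nat;
  constr : {set {set 'I_nports}} }.

Definition NOR : gadget :=
  @Gadget 3 [set set0; [set inord 0; inord 2]; [set inord 1; inord 2];
                     [set inord 0; inord 1; inord 2]].
Definition fanout (k : nat) : gadget :=
  @Gadget k.+1 [set [set ord0]; [set i : 'I_k.+1 | i != ord0]].
Definition OR : gadget :=
  @Gadget 3 [set [set inord 2]; [set inord 0]; [set inord 1];
                 [set inord 0; inord 1]].
Definition AND : gadget :=
  @Gadget 3 [set [set inord 2]; [set inord 0; inord 2]; [set inord 1; inord 2];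
                 [set inord 0; inord 1]].
(* crossover: ports a1,b1,a2,b2 = 0,1,2,3 in this cyclic order *)
Definition crossover : gadget :=
  @Gadget 4 [set [set inord 0; inord 1]; [set inord 2; inord 1];
                 [set inord 0; inord 3]; [set inord 2; inord 3]].

Definition NOR_fanout (g : gadget) : Prop :=
  g = NOR \/ exists k, 0 < k /\ g = fanout k.

(* ---------- simulations ----------
   A simulation with m dangling edges: nv vertices labelled by gadgets,
   darts (half-edges) are the ports of the vertices (inl) together with the
   m ports of the outside-world vertex (inr), and [edge] is the pairing of
   darts into edges. *)
Record sim (m : nat) := Sim {
  nv : nat;
  lab : 'I_nv -> gadget;
  edge : ({v : 'I_nv & 'I_(nports (lab v))} + 'I_m)%type ->
         ({v : 'I_nv & 'I_(nports (lab v))} + 'I_m)%type }.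

Arguments nv {m} s.
Arguments lab {m} s _.
Arguments edge {m} s _.

Section Sim.
Variables (m : nat) (s : sim m).

Local Notation sdart := ({v : 'I_(nv s) & 'I_(nports (lab s v))} + 'I_m)%type.

Definition wf_sim (S : gadget -> Prop) : Prop :=
  (forall v, S (lab s v)) /\
  (forall d : sdart, edge s (edge s d) = d) /\
  (forall d : sdart, edge s d <> d) /\
  (forall i : 'I_m, exists x, edge s (inr i) = inl x).

(* rotation system: around each vertex (including the outside world) the
   darts are in the cyclic order of the ports *)
Definition rot (d : sdart) : sdart :=
  match d with
  | inl x => inl (Tagged (fun v => 'I_(nports (lab s v))) (ordS (tagged x)))
  | inr i => inr (ordS i)
  end.

Definition face_perm (d : sdart) : sdart := rot (edge s d).

Definition adj_rel : rel sdart :=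
  fun x y => (y == edge s x) || (y == rot x).

(* Planarity of the graph including the outside world with the given
   rotation system (Heffter-Edmonds): Euler's formula V - E + F = 2 holds in
   every connected component, i.e. 2V + 2F = #darts + 4C (each component has
   V - E + F <= 2).  Vertices without ports (isolated, trivially planar) are
   not darts and are irrelevant. *)
Definition planar_sim : Prop :=
  ((fcard rot predT + fcard face_perm predT).*2 =
     #|predT : pred sdart| + 4 * n_comp adj_rel predT)%N.

(* assignments: a boolean on each dart, true iff the edge points into the
   endpoint owning that dart; the two darts of an edge get opposite values,
   so these are exactly the orientations of all edges *)
Definition assignment (dir : {ffun sdart -> bool}) : Prop :=
  forall d, dir (edge s d) = ~~ dir d.

Definition satisfied (dir : {ffun sdart -> bool}) : Prop :=
  forall v : 'I_(nv s),
    [set p | dir (inl (Tagged (fun v => 'I_(nports (lab s v))) p))]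
      \in constr (lab s v).

Definition inward (dir : {ffun sdart -> bool}) : {set 'I_m} :=
  [set i | ~~ dir (inr i)].

Definition realizes (D : {set 'I_m}) (dir : {ffun sdart -> bool}) : Prop :=
  assignment dir /\ satisfied dir /\ inward dir = D.

End Sim.

Arguments wf_sim {m} s S.
Arguments planar_sim {m} s.
Arguments realizes {m} s D dir.

Definition planar_parsimoniously_simulates (S : gadget -> Prop) (G : gadget) : Prop :=
  exists s : sim (nports G),
    wf_sim s S /\ planar_sim s /\
    (forall D : {set 'I_(nports G)},
        (D \in constr G <-> exists dir, realizes s D dir) /\
        (D \in constr G -> forall dir1 dir2,
            realizes s D dir1 -> realizes s D dir2 -> dir1 = dir2)).

(* Submission.v *)
Require Import Defs.
From mathcomp Require Import all_boot.
Set Implicit Arguments. Unset Strict Implicit. Unset Printing Implicit Defensive.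


Inductive kind := KNOR | KFan of nat.
Definition knp (c : kind) : nat := match c with KNOR => 3 | KFan k => k.+1 end.
Definition constr_of (c : kind) : {set {set 'I_(knp c)}} :=
  match c as c return {set {set 'I_(knp c)}} with KNOR => constr NOR | KFan k => constr (fanout k) end.
Definition kg (c : kind) : gadget := @Gadget (knp c) (constr_of c).
Definition allowed (c : kind) : seq (seq bool) := match c with
 | KNOR => [:: [:: false; false; false]; [:: true; false; true]; [:: false; true; true]; [:: true; true; true]]
 | KFan k => [:: true :: nseq k false; false :: nseq k true] end.

Definition bitsOf n (X : {set 'I_n}) (j : nat) : bool := [exists q : 'I_n, (val q == j) && (q \in X)].
Definition bl n (X : {set 'I_n}) := mkseq (bitsOf X) n.

Lemma bitsOf_val n (X : {set 'I_n}) (i : 'I_n) : bitsOf X i = (i \in X).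
Proof.
apply/existsP/idP => [[q /andP[/eqP/val_inj -> //]]|Hi].
by exists i; rewrite eqxx.
Qed.

Lemma bitsOf_lt n (X : {set 'I_n}) j (H : j < n) : bitsOf X j = (Ordinal H \in X).
Proof. by rewrite -bitsOf_val. Qed.

Lemma bl_inj n : injective (@bl n).
Proof.
move=> X Y E; apply/setP => i; have := congr1 (fun s => nth false s i) E.
by rewrite /bl !nth_mkseq // !bitsOf_val.
Qed.

Lemma bl_setE n (X : {set 'I_n}) (P : nat -> bool) :
  (forall i : 'I_n, (i \in X) = P i) -> bl X = mkseq P n.
Proof.
move=> HP; rewrite /bl /mkseq; apply/eq_in_map => j; rewrite mem_iota add0n => Hj.
by rewrite (bitsOf_lt _ Hj) HP.
Qed.

Lemma inord_eq n (i : 'I_n.+1) j : j < n.+1 -> (i == inord j) = (val i == j).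
Proof. by move=> H; rewrite -val_eqE /= inordK. Qed.

Lemma mkseq_eq0 k : mkseq (fun j => j == 0) k.+1 = true :: nseq k false.
Proof.
apply: (@eq_from_nth _ false); first by rewrite size_mkseq /= size_nseq.
move=> i; rewrite size_mkseq => Hi; rewrite nth_mkseq //.
by case: i Hi => //= i Hi; rewrite nth_nseq -ltnS Hi.
Qed.

Lemma mkseq_neq0 k : mkseq (fun j => j != 0) k.+1 = false :: nseq k true.
Proof.
apply: (@eq_from_nth _ false); first by rewrite size_mkseq /= size_nseq.
move=> i; rewrite size_mkseq => Hi; rewrite nth_mkseq //.
by case: i Hi => //= i Hi; rewrite nth_nseq -ltnS Hi.
Qed.

Lemma memsetE n (X : {set 'I_n}) (A : {set 'I_n}) : (X == A) = (bl X == bl A).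
Proof. by rewrite (inj_eq (@bl_inj n)). Qed.

Lemma gadget_mem c (X : {set 'I_(knp c)}) : (X \in constr (kg c)) = (bl X \in allowed c).
Proof.
case: c X => [|k] X /=.
  rewrite !inE !memsetE.
  rewrite (@bl_setE _ set0 (fun j => false)); last by move=> i; rewrite inE.
  rewrite (@bl_setE _ [set inord 0; inord 2] (fun j => (j == 0) || (j == 2))); last by move=> i; rewrite !inE !inord_eq.
  rewrite (@bl_setE _ [set inord 1; inord 2] (fun j => (j == 1) || (j == 2))); last by move=> i; rewrite !inE !inord_eq.
  rewrite (@bl_setE _ [set inord 0; inord 1; inord 2] (fun j => (j == 0) || (j == 1) || (j == 2))); last by move=> i; rewrite !inE !inord_eq.
  by rewrite /= !orbA.
rewrite !inE !memsetE.
rewrite (@bl_setE _ [set ord0] (fun j => j == 0)); last by move=> i; rewrite !inE -val_eqE.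
rewrite (@bl_setE _ [set i : 'I_k.+1 | i != ord0] (fun j => j != 0)); last by move=> i; rewrite !inE -val_eqE.
by rewrite mkseq_eq0 mkseq_neq0.
Qed.


Lemma sumn_split (s : seq nat) n : n < sumn s ->
  exists v, v < size s /\ sumn (take v s) <= n < sumn (take v s) + nth 0 s v.
Proof.
elim: s n => [|a s IH] n //= Hn.
case: (ltnP n a) => Ha; first by exists 0; rewrite /= Ha.
have [v [Hv /andP[H1 H2]]] : exists v, v < size s /\ sumn (take v s) <= n - a < sumn (take v s) + nth 0 s v.
  by apply: IH; rewrite ltn_subLR.
exists v.+1; split => //=; apply/andP; split.
  by rewrite -leq_subRL.
by rewrite -addnA -ltn_subLR.
Qed.

Section Net.
Variable m : nat.
Variable ks : seq kind.
Variable ptab : seq nat.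

Definition partner n := nth n ptab n.
Definition kd (v : nat) := nth KNOR ks v.
Definition offs k := sumn (map knp (take k ks)).
Definition tot := sumn (map knp ks).
Definition NN := tot + m.

Definition dart := ({v : 'I_(size ks) & 'I_(knp (kd v))} + 'I_m)%type.

Definition code (d : dart) : nat :=
  match d with inl x => offs (tag x) + tagged x | inr i => tot + i end.

Lemma offsS v : v < size ks -> offs v.+1 = offs v + knp (kd v).
Proof. by move=> Hv; rewrite /offs (take_nth KNOR Hv) map_rcons sumn_rcons. Qed.

Lemma offs_le_S w : offs w <= offs w.+1.
Proof.
case: (ltnP w (size ks)) => Hw; first by rewrite offsS // leq_addr.
by rewrite /offs !take_oversize // (leq_trans Hw).
Qed.

Lemma offs_mono u w : u <= w -> offs u <= offs w.
Proof.
move=> /subnK <-; elim: (w - u) => [|k IH] //=.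
by apply: leq_trans IH _; rewrite addSn offs_le_S.
Qed.

Lemma offs_size : offs (size ks) = tot.
Proof. by rewrite /offs take_size. Qed.

Lemma vert_lt v p : v < size ks -> p < knp (kd v) -> offs v + p < offs v.+1.
Proof. by move=> Hv Hp; rewrite offsS // ltn_add2l. Qed.

Lemma vert_lt_tot v p : v < size ks -> p < knp (kd v) -> offs v + p < tot.
Proof. by move=> Hv Hp; rewrite -offs_size; apply: leq_trans (vert_lt Hv Hp) (offs_mono _). Qed.

Lemma vert_uniq v1 p1 v2 p2 : v1 < size ks -> v2 < size ks ->
  p1 < knp (kd v1) -> p2 < knp (kd v2) -> offs v1 + p1 = offs v2 + p2 -> v1 = v2 /\ p1 = p2.
Proof.
move=> H1 H2 Hp1 Hp2 E.
case: (ltngtP v1 v2) => Hv.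
- have := leq_trans (vert_lt H1 Hp1) (offs_mono Hv).
  by rewrite E -ltn_subRL subnn.
- have := leq_trans (vert_lt H2 Hp2) (offs_mono Hv).
  by rewrite -E -ltn_subRL subnn.
- by subst; split => //; apply/eqP; rewrite -(eqn_add2l (offs v2)) E.
Qed.

Lemma code_lt_tot (x : {v : 'I_(size ks) & 'I_(knp (kd v))}) : offs (tag x) + tagged x < tot.
Proof. by apply: vert_lt_tot. Qed.

Lemma code_inj : injective code.
Proof.
case=> [[v p]|i] [[w q]|j] /=.
- move=> E; have [Hvw Hpq] := vert_uniq (ltn_ord v) (ltn_ord w) (ltn_ord p) (ltn_ord q) E.
  move/val_inj: Hvw => Hvw; subst w; congr (inl _); congr (existT _ _ _); exact: val_inj.
- by move=> E; have := @vert_lt_tot v p (ltn_ord v) (ltn_ord p); rewrite E -ltn_subRL subnn.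
- by move=> E; have := @vert_lt_tot w q (ltn_ord w) (ltn_ord q); rewrite -E -ltn_subRL subnn.
- by move/eqP; rewrite eqn_add2l => /eqP/val_inj ->.
Qed.

Lemma code_lt d : code d < NN.
Proof.
case: d => [x|i] /=; last by rewrite /NN ltn_add2l.
by apply: leq_trans (code_lt_tot x) (leq_addr _ _).
Qed.

Lemma code_surj n : n < NN -> exists d, code d = n.
Proof.
move=> Hn; case: (ltnP n tot) => Ht.
  have [v [Hv /andP[H1 H2]]] := sumn_split Ht.
  rewrite size_map in Hv.
  rewrite -map_take (nth_map KNOR) // in H1 H2.
  have Hp : n - offs v < knp (kd v) by rewrite ltn_subLR.
  exists (inl (existT (fun v : 'I_(size ks) => 'I_(knp (kd v))) (Ordinal Hv) (Ordinal Hp))).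
  by rewrite /= subnKC.
have Hi : n - tot < m by rewrite ltn_subLR.
by exists (inr (Ordinal Hi)); rewrite /= subnKC.
Qed.

Definition edgeF (d : dart) : dart := odflt d [pick d' | code d' == partner (code d)].

Lemma code_edge d : partner (code d) < NN -> code (edgeF d) = partner (code d).
Proof.
move=> H; rewrite /edgeF; case: pickP => [d' /eqP //|H0].
by have [d' Hd'] := code_surj H; have := H0 d'; rewrite Hd' eqxx.
Qed.

Definition NetSim : sim m := @Sim m (size ks) (fun v => kg (kd v)) edgeF.

Definition chk_kinds := all (fun c => match c with KNOR => true | KFan k => 0 < k end) ks.
Definition chk_partner :=
  all (fun n => [&& partner n < NN, partner (partner n) == n & partner n != n]) (iota 0 NN)
  && all (fun i => partner (tot + i) < tot) (iota 0 m).

Lemma partnerP n : chk_partner -> n < NN -> [&& partner n < NN, partner (partner n) == n & partner n != n].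
Proof. by case/andP=> /allP H _ Hn; apply: H; rewrite mem_iota. Qed.

Lemma wf_S : chk_kinds -> chk_partner -> wf_sim NetSim NOR_fanout.
Proof.
move=> Hk Hp; split; [|split; [|split]].
- move=> v; rewrite /= /kd; move: Hk; rewrite /chk_kinds => /(all_nthP KNOR) H.
  have := H v (ltn_ord v).
  case: (nth KNOR ks v) => [|k] Hk0; [by left | by right; exists k].
- move=> d /=; apply: code_inj.
  have /and3P[H1 H2 H3] := partnerP Hp (code_lt d).
  have E1 := code_edge H1.
  by rewrite code_edge E1 ?(eqP H2) // code_lt.
- move=> d /= E; have /and3P[H1 H2 H3] := partnerP Hp (code_lt d).
  by move: H3; rewrite -code_edge // E eqxx.
- move=> i /=; have /and3P[H1 H2 H3] := partnerP Hp (code_lt (inr i)).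
  have Ht : partner (tot + i) < tot by move: Hp => /andP[_ /allP Hm]; apply: Hm; rewrite mem_iota /=.
  case E: (edgeF (inr i)) => [x|j]; first by exists x.
  by have := code_edge H1; rewrite E /= => E2; move: Ht; rewrite -E2 -ltn_subRL subnn.
Qed.

End Net.


Lemma uniq_map_inj (T1 T2 : eqType) (f : T1 -> T2) (s : seq T1) a b :
  uniq (map f s) -> a \in s -> b \in s -> f a = f b -> a = b.
Proof.
move=> U Ha Hb E.
rewrite -(nth_index a Ha) -(nth_index a Hb); congr nth.
have Hia : index a s < size (map f s) by rewrite size_map index_mem.
have Hib : index b s < size (map f s) by rewrite size_map index_mem.
apply: (uniqP (f a) U) => //.
have Ha' : index a s < size s by rewrite index_mem.
have Hb' : index b s < size s by rewrite index_mem.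
by rewrite (nth_map a _ _ Ha') (nth_map a _ _ Hb') !nth_index.
Qed.

Lemma connect_sym_of (T : finType) (e : rel T) :
  (forall x y, e x y -> connect e y x) -> connect_sym e.
Proof.
move=> He.
suff H : forall x y, connect e x y -> connect e y x.
  by move=> x y; apply/idP/idP; apply: H.
move=> x y /connectP[p ep ->]; elim: p x ep => //= z p IH x /andP[exz pz].
exact: connect_trans (IH _ pz) (He _ _ exz).
Qed.

Section Count.
Variables (T : finType) (N : nat) (cd : T -> nat).
Hypotheses (cd_inj : injective cd) (cd_lt : forall x, cd x < N)
  (cd_surj : forall n, n < N -> exists x, cd x = n).

Lemma card_sel (Rc : seq nat) : uniq Rc -> all (fun r => r < N) Rc ->
  #|[pred x | cd x \in Rc]| = size Rc.
Proof.
move=> U /allP HR; rewrite cardE -(size_map cd); apply: perm_size.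
apply: uniq_perm => //; first by rewrite map_inj_uniq ?enum_uniq.
move=> y; apply/mapP/idP => [[x]|Hy]; first by rewrite mem_enum inE => Hx ->.
have [x Hx] := cd_surj (HR _ Hy); exists x => //; by rewrite mem_enum inE Hx.
Qed.

Lemma card_code : #|predT : pred T| = N.
Proof.
have HA : all (fun r => r < N) (iota 0 N) by apply/allP => r; rewrite mem_iota.
rewrite -{1}(size_iota 0 N) -(card_sel (iota_uniq 0 N) HA).
by apply: eq_card => x; rewrite !inE mem_iota /= cd_lt.
Qed.

Lemma count_cert (e : rel T) (Rc : seq nat) (cls sN kk : nat -> nat) :
  connect_sym e -> uniq Rc -> all (fun r => r < N) Rc ->
  (forall x y, e x y -> cls (cd x) = cls (cd y)) ->
  uniq (map cls Rc) ->
  (forall x y, cd y = sN (cd x) -> e x y) ->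
  (forall n, n < N -> sN n < N) ->
  (forall n, n < N -> iter (kk n) sN n \in Rc) ->
  n_comp e predT = size Rc.
Proof.
move=> esym U HR Hcl Ucl Hst HsN Hkk.
have reach : forall k x, exists y, cd y = iter k sN (cd x) /\ connect e x y.
  elim=> [|k IH] x; first by exists x.
  have [y [Hy Cy]] := IH x.
  have [z Hz] := cd_surj (HsN _ (cd_lt y)).
  exists z; split; first by rewrite iterS -Hy Hz.
  by apply: connect_trans Cy (connect1 _); apply: Hst.
have cover : forall x, exists2 r, cd r \in Rc & connect e x r.
  move=> x; have [y [Hy Cy]] := reach (kk (cd x)) x.
  by exists y => //; rewrite Hy Hkk.
have clsC : forall x y, connect e x y -> cls (cd x) = cls (cd y).
  move=> x y /connectP[p ep ->]; elim: p x ep => //= z p IH x /andP[exz pz].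
  by rewrite (Hcl _ _ exz) (IH _ pz).
rewrite /n_comp_mem -(card_sel U HR).
rewrite -(@card_in_imset _ _ (root e) [pred x | cd x \in Rc]); last first.
  move=> r1 r2; rewrite !inE => H1 H2 /(rootP esym) /clsC E.
  by apply: cd_inj; apply: (uniq_map_inj Ucl H1 H2 E).
apply: eq_card => x; rewrite !inE andbT; apply/idP/idP => [Hx|].
  have [r Hr Cr] := cover x.
  rewrite -(eqP Hx) (rootP esym Cr); apply/imsetP; exists r => //.
by case/imsetP=> r _ ->; apply: roots_root.
Qed.

End Count.


Fixpoint vtxs (s : seq nat) n := match s with
  | [::] => 0 | a :: s' => if n < a then 0 else (vtxs s' (n - a)).+1 end.

Lemma vtxs_spec s v p : v < size s -> p < nth 0 s v -> vtxs s (sumn (take v s) + p) = v.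
Proof.
elim: s v => [|a s IH] [|v] //= Hv Hp; first by rewrite Hp.
rewrite -addnA ltnNge leq_addr /= addKn IH //.
Qed.

Section Net2.
Variable m : nat.
Variable ks : seq kind.
Variable ptab : seq nat.

Local Notation tot := (tot ks).
Local Notation NN := (NN m ks).
Local Notation offs := (offs ks).
Local Notation kd := (kd ks).
Local Notation code := (@code m ks).
Local Notation SS := (NetSim m ks ptab).
Local Notation partner := (partner ptab).

Definition vtx n := vtxs (map knp ks) n.
Definition rotN n := if n < tot then offs (vtx n) + (n - offs (vtx n)).+1 %% knp (kd (vtx n))
                     else tot + (n - tot).+1 %% m.
Definition faceN n := rotN (partner n).
Definition adjN (sel : seq bool) n := if nth false sel n then partner n else rotN n.

Lemma vtx_offs v p : v < size ks -> p < knp (kd v) -> vtx (offs v + p) = v.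
Proof.
move=> Hv Hp; rewrite /vtx /Submission.offs map_take vtxs_spec ?size_map //.
by rewrite (nth_map KNOR).
Qed.

Lemma code_rot (d : dart m ks) : code (@Defs.rot m SS d) = rotN (code d).
Proof.
case: d => [[v p]|i] /=; rewrite /rotN.
  rewrite (vert_lt_tot (ltn_ord v) (ltn_ord p)) vtx_offs // addKn //.
by rewrite ltnNge leq_addr /= addKn.
Qed.

Definition chk_rot := uniq (map rotN (iota 0 NN)) && all (fun n => rotN n < NN) (iota 0 NN).

Definition cnt_ok (Rc : seq nat) (cls sN kk : nat -> nat) :=
  [&& uniq Rc, all (fun r => r < NN) Rc, uniq (map cls Rc) &
     all (fun n => (sN n < NN) && (iter (kk n) sN n \in Rc)) (iota 0 NN)].

Definition closed_ok (cls sN : nat -> nat) := all (fun n => cls (sN n) == cls n) (iota 0 NN).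

Lemma rot_inj : chk_rot -> injective (@Defs.rot m SS).
Proof.
case/andP=> U _ x y E; apply: code_inj.
have := congr1 code E; rewrite !code_rot => E2.
have Hx : code x \in iota 0 NN by rewrite mem_iota code_lt.
have Hy : code y \in iota 0 NN by rewrite mem_iota code_lt.
exact: (uniq_map_inj U Hx Hy E2).
Qed.

Lemma cnt_apply (e : rel (dart m ks)) Rc cls sN kk :
  connect_sym e -> cnt_ok Rc cls sN kk ->
  (forall x y, e x y -> cls (code x) = cls (code y)) ->
  (forall x y, code y = sN (code x) -> e x y) ->
  n_comp e predT = size Rc.
Proof.
move=> esym /and4P[U HR Ucl /allP Hall0] Hcl Hst.
have Hall : forall n, n < NN -> (sN n < NN) && (iter (kk n) sN n \in Rc).
  by move=> n Hn; apply: Hall0; rewrite mem_iota.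
apply: (@count_cert _ NN code (@code_inj m ks) (@code_lt m ks) (@code_surj m ks) e Rc cls sN kk) => //.
- by move=> n Hn; case/andP: (Hall n Hn).
- by move=> n Hn; case/andP: (Hall n Hn).
Qed.

Lemma planar_S (Rr Rf : seq nat) (cr cf kr kf ka : nat -> nat) (sel : seq bool) :
  chk_kinds ks -> chk_partner m ks ptab -> chk_rot ->
  cnt_ok Rr cr rotN kr -> closed_ok cr rotN ->
  cnt_ok Rf cf faceN kf -> closed_ok cf faceN ->
  cnt_ok [:: 0] (fun _ => 0) (adjN sel) ka ->
  (size Rr + size Rf).*2 == NN + 4 ->
  planar_sim SS.
Proof.
move=> Hk Hp Hr Cr Clr Cf Clf Ca Heq.
have [_ [Hinv [_ _]]] := wf_S Hk Hp.
have Hedge : forall d, code (edge SS d) = partner (code d).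
  move=> d; apply: code_edge; by have /and3P[] := partnerP Hp (code_lt d).
have rinj := rot_inj Hr.
have finj : injective (@face_perm m SS).
  move=> x y; rewrite /face_perm => /rinj E.
  by rewrite -(Hinv x) E Hinv.
rewrite /planar_sim (card_code (@code_inj m ks) (@code_lt m ks) (@code_surj m ks)).
rewrite (cnt_apply (fconnect_sym rinj) Cr); last 2 first.
- move=> x y /eqP <-; rewrite code_rot; apply/esym/eqP.
  by move/allP: Clr; apply; rewrite mem_iota code_lt.
- by move=> x y E; apply/eqP/code_inj; rewrite code_rot.
rewrite (cnt_apply (fconnect_sym finj) Cf); last 2 first.
- move=> x y /eqP <-; rewrite /face_perm code_rot Hedge; apply/esym/eqP.
  by move/allP: Clf; apply; rewrite mem_iota code_lt.
- by move=> x y E; apply/eqP/code_inj; rewrite /face_perm code_rot Hedge.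
have asym : connect_sym (@adj_rel m SS).
  apply: connect_sym_of => x y /orP[]/eqP ->.
    by apply: connect1; rewrite /adj_rel Hinv eqxx.
  have : fconnect (@Defs.rot m SS) (@Defs.rot m SS x) x by rewrite fconnect_sym // fconnect1.
  apply: connect_sub => a b /eqP <-; apply: connect1; by rewrite /adj_rel eqxx orbT.
rewrite (cnt_apply asym Ca) //.
- by rewrite (eqP Heq).
- move=> x y E; rewrite /adj_rel; move: E; rewrite /adjN.
  case: (nth false sel (code x)) => E.
    by rewrite -Hedge in E; rewrite (code_inj E) eqxx.
  by rewrite -code_rot in E; rewrite (code_inj E) eqxx orbT.
Qed.

End Net2.


Inductive step := SE of nat | SV of nat & nat.

Section Net3.
Variable m : nat.
Variable ks : seq kind.
Variable ptab : seq nat.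

Local Notation tot := (tot ks).
Local Notation NN := (NN m ks).
Local Notation offs := (offs ks).
Local Notation kd := (kd ks).
Local Notation code := (@code m ks).
Local Notation SS := (NetSim m ks ptab).
Local Notation partner := (partner ptab).

Definition stepCode s := match s with SE n => n | SV v p => offs v + p end.
Definition local_ok c (known : nat -> bool) p :=
  all (fun l1 => all (fun l2 =>
     (all (fun j => known j ==> (nth false l1 j == nth false l2 j)) (iota 0 (knp c)))
        ==> (nth false l1 p == nth false l2 p)) (allowed c)) (allowed c).
Definition ok_step (K : seq nat) s := match s with
  | SE n => partner n \in K
  | SV v p => [&& v < size ks, p < knp (kd v) & local_ok (kd v) (fun j => offs v + j \in K) p]
  end.
Fixpoint chk_cert (K : seq nat) (steps : seq step) := match steps with
  | [::] => all (fun n => n \in K) (iota 0 NN)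
  | s :: r => ok_step K s && chk_cert (stepCode s :: K) r end.

Lemma edge_code (d : dart m ks) : chk_partner m ks ptab -> code (edge SS d) = partner (code d).
Proof. by move=> Hp; apply: code_edge; have /and3P[] := partnerP Hp (code_lt d). Qed.

Lemma sat_bl (dir : {ffun dart m ks -> bool}) (v : 'I_(size ks)) :
  @satisfied m SS dir ->
  bl [set p : 'I_(knp (kd v)) | dir (inl (Tagged (fun v : 'I_(size ks) => 'I_(knp (kd v))) p))] \in allowed (kd v).
Proof. by move=> /(_ v); rewrite gadget_mem. Qed.

Lemma determ (dir1 dir2 : {ffun dart m ks -> bool}) steps K :
  chk_partner m ks ptab ->
  @assignment m SS dir1 -> @assignment m SS dir2 ->
  @satisfied m SS dir1 -> @satisfied m SS dir2 ->
  (forall d, code d \in K -> dir1 d = dir2 d) -> chk_cert K steps -> dir1 = dir2.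
Proof.
move=> Hp A1 A2 S1 S2; elim: steps K => [|s r IH] K HK /=.
  move/allP=> Hall; apply/ffunP => d; apply: HK; apply: Hall; by rewrite mem_iota code_lt.
case/andP=> Hs Hr; apply: (IH _ _ Hr) => {Hr} d; rewrite inE => /orP[/eqP Hd|]; last exact: HK.
case: s Hs Hd => [n|v p] /=.
  move=> Hn Hd; have := HK (edge SS d); rewrite edge_code // Hd => /(_ Hn).
  by rewrite A1 A2 => /negb_inj.
case/and3P=> Hv Hp0 Hloc Hd.
case: d Hd => [[w q]|i] /= Hd; last first.
  by have := vert_lt_tot Hv Hp0; rewrite -Hd -ltn_subRL subnn.
have [Ew Eq] := vert_uniq (ltn_ord w) Hv (ltn_ord q) Hp0 Hd; subst v p.
set X1 := [set p : 'I_(knp (kd w)) | dir1 (inl (Tagged (fun v : 'I_(size ks) => 'I_(knp (kd v))) p))].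
set X2 := [set p : 'I_(knp (kd w)) | dir2 (inl (Tagged (fun v : 'I_(size ks) => 'I_(knp (kd v))) p))].
have B1 : bl X1 \in allowed (kd w) := sat_bl w S1.
have B2 : bl X2 \in allowed (kd w) := sat_bl w S2.
move/allP: Hloc => /(_ _ B1) /allP /(_ _ B2) /implyP H.
have : nth false (bl X1) q == nth false (bl X2) q.
  apply: H; apply/allP => j; rewrite mem_iota add0n => Hj; apply/implyP => Hk.
  rewrite /bl !nth_mkseq // !(bitsOf_lt _ Hj) !inE.
  by apply/eqP; apply: HK.
by rewrite /bl !nth_mkseq // !bitsOf_val !inE => /eqP.
Qed.

End Net3.


Fixpoint allbits n : seq (seq bool) := match n with
  | 0 => [:: [::]]
  | n.+1 => [seq true :: l | l <- allbits n] ++ [seq false :: l | l <- allbits n] end.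

Lemma allbitsP l : l \in allbits (size l).
Proof. elim: l => [|b l IH] //=; rewrite mem_cat; case: b; by rewrite map_f ?orbT. Qed.

Lemma nth_map_index (f : nat -> bool) (s : seq nat) x : x \in s -> nth false (map f s) (index x s) = f x.
Proof. by move=> H; rewrite (nth_map 0) ?index_mem // nth_index. Qed.

Section Net4.
Variable m : nat.
Variable ks : seq kind.
Variable ptab : seq nat.

Local Notation tot := (tot ks).
Local Notation NN := (NN m ks).
Local Notation offs := (offs ks).
Local Notation kd := (kd ks).
Local Notation code := (@code m ks).
Local Notation SS := (NetSim m ks ptab).
Local Notation partner := (partner ptab).

Definition dirT (t : seq bool) : {ffun dart m ks -> bool} := [ffun d => nth false t (code d)].
Definition outbits (t : seq bool) := mkseq (fun i => ~~ nth false t (tot + i)) m.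
Definition tab_ok (allowedG : seq (seq bool)) (t : seq bool) :=
  [&& all (fun n => nth false t (partner n) == ~~ nth false t n) (iota 0 NN),
      all (fun v => mkseq (fun j => nth false t (offs v + j)) (knp (kd v)) \in allowed (kd v))
          (iota 0 (size ks)) &
      outbits t \in allowedG].
Definition cover_ok (allowedG : seq (seq bool)) (tabs : seq (seq bool)) :=
  all (fun l => has (fun t => outbits t == l) tabs) allowedG.
Definition K0 (ins : seq nat) := map (fun i => tot + i) ins.
Definition compl_ok (tabs : seq (seq bool)) ins :=
  all (fun b => has (fun t => map (nth false t) (K0 ins) == b) tabs) (allbits (size ins)).
Definition valAt (dir : {ffun dart m ks -> bool}) n :=
  if [pick d | code d == n] is Some d then dir d else false.

Lemma valAt_code dir d : valAt dir (code d) = dir d.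
Proof. by rewrite /valAt; case: pickP => [d' /eqP/code_inj -> //|/(_ d)]; rewrite eqxx. Qed.

Hypothesis Hp : chk_partner m ks ptab.

Lemma dirT_assign G t : tab_ok G t -> @assignment m SS (dirT t).
Proof.
case/and3P=> /allP H _ _ d; rewrite !ffunE edge_code //.
by apply/eqP/H; rewrite mem_iota code_lt.
Qed.

Lemma dirT_sat G t : tab_ok G t -> @satisfied m SS (dirT t).
Proof.
case/and3P=> _ /allP H _ v; rewrite /= gadget_mem.
rewrite (@bl_setE _ _ (fun j => nth false t (offs v + j))); last by move=> i; rewrite inE ffunE.
by apply: H; rewrite mem_iota /=.
Qed.

Lemma dirT_inward t : bl (@inward m SS (dirT t)) = outbits t.
Proof. by apply: bl_setE => i; rewrite inE ffunE. Qed.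

End Net4.

Lemma sim_main (G : gadget) ks ptab allowedG tabs steps ins :
  (forall D : {set 'I_(nports G)}, (D \in constr G) = (bl D \in allowedG)) ->
  chk_kinds ks -> chk_partner (nports G) ks ptab ->
  planar_sim (NetSim (nports G) ks ptab) ->
  all (tab_ok (nports G) ks ptab allowedG) tabs -> cover_ok (nports G) ks allowedG tabs ->
  compl_ok ks tabs ins ->
  chk_cert (nports G) ks ptab (K0 ks ins) steps ->
  planar_parsimoniously_simulates NOR_fanout G.
Proof.
move=> HG Hk Hp Hpl /allP Htab /allP Hcov /allP Hcmp Hcert.
set m := nports G in HG Hp Hpl Hcmp Hcert Htab Hcov *.
exists (NetSim m ks ptab); split; first exact: wf_S.
split => // D.
have agree : forall dir1 dir2 : {ffun dart m ks -> bool},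
    @assignment m (NetSim m ks ptab) dir1 -> @assignment m (NetSim m ks ptab) dir2 ->
    @satisfied m (NetSim m ks ptab) dir1 -> @satisfied m (NetSim m ks ptab) dir2 ->
    (forall d, code d \in K0 ks ins -> dir1 d = dir2 d) -> dir1 = dir2.
  by move=> dir1 dir2 A1 A2 S1 S2 HK; apply: (determ Hp A1 A2 S1 S2 HK Hcert).
have inrK : forall d : dart m ks, code d \in K0 ks ins -> exists i, d = inr i.
  case=> [x|i] /=; last by exists i.
  case/mapP=> j _ E; have := code_lt_tot x; rewrite E -ltn_subRL subnn //.
split.
  split.
    rewrite HG => HD; have [t Ht /eqP Et] := hasP (Hcov _ HD).
    exists (dirT m ks t); split; first exact (@dirT_assign m ks ptab Hp allowedG t (Htab _ Ht)).
    split; first exact (@dirT_sat m ks ptab allowedG t (Htab _ Ht)).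
    by apply: bl_inj; rewrite dirT_inward Et.
  case=> dir [A [Sd <-]].
  set b := map (valAt dir) (K0 ks ins).
  have Hb : b \in allbits (size ins) by have := allbitsP b; rewrite /b /K0 !size_map.
  have [t Ht /eqP Et] := hasP (Hcmp _ Hb).
  have E : dir = dirT m ks t.
    apply: agree => //; [exact (@dirT_assign m ks ptab Hp allowedG t (Htab _ Ht)) | exact (@dirT_sat m ks ptab allowedG t (Htab _ Ht)) |].
    move=> d Hd; rewrite ffunE -(valAt_code dir).
    have := congr1 (fun s => nth false s (index (code d) (K0 ks ins))) Et.
    by rewrite /b !nth_map_index.

  rewrite E HG dirT_inward.
  by case/and3P: (Htab _ Ht).
move=> _ dir1 dir2 [A1 [S1 I1]] [A2 [S2 I2]].
apply: agree => // d /inrK [i ->].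
have : i \in @inward m (NetSim m ks ptab) dir1 = (i \in @inward m (NetSim m ks ptab) dir2) by rewrite I1 I2.
by rewrite !inE => /negb_inj.
Qed.


Definition allowed_OR : seq (seq bool) :=
  [:: [:: false; false; true]; [:: true; false; false]; [:: false; true; false]; [:: true; true; false]].
Definition allowed_AND : seq (seq bool) :=
  [:: [:: false; false; true]; [:: true; false; true]; [:: false; true; true]; [:: true; true; false]].
Definition allowed_CROSS : seq (seq bool) :=
  [:: [:: true; true; false; false]; [:: false; true; true; false];
      [:: true; false; false; true]; [:: false; false; true; true]].

Lemma OR_mem (D : {set 'I_(nports OR)}) : (D \in constr OR) = (bl D \in allowed_OR).
Proof.
rewrite /= !inE !memsetE.
rewrite (@bl_setE _ [set inord 2] (fun j => j == 2)); last by move=> i; rewrite !inE !inord_eq.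
rewrite (@bl_setE _ [set inord 0] (fun j => j == 0)); last by move=> i; rewrite !inE !inord_eq.
rewrite (@bl_setE _ [set inord 1] (fun j => j == 1)); last by move=> i; rewrite !inE !inord_eq.
rewrite (@bl_setE _ [set inord 0; inord 1] (fun j => (j == 0) || (j == 1))); last by move=> i; rewrite !inE !inord_eq.
by rewrite /= !orbA.
Qed.

Lemma AND_mem (D : {set 'I_(nports AND)}) : (D \in constr AND) = (bl D \in allowed_AND).
Proof.
rewrite /= !inE !memsetE.
rewrite (@bl_setE _ [set inord 2] (fun j => j == 2)); last by move=> i; rewrite !inE !inord_eq.
rewrite (@bl_setE _ [set inord 0; inord 2] (fun j => (j == 0) || (j == 2))); last by move=> i; rewrite !inE !inord_eq.
rewrite (@bl_setE _ [set inord 1; inord 2] (fun j => (j == 1) || (j == 2))); last by move=> i; rewrite !inE !inord_eq.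
rewrite (@bl_setE _ [set inord 0; inord 1] (fun j => (j == 0) || (j == 1))); last by move=> i; rewrite !inE !inord_eq.
by rewrite /= !orbA.
Qed.

Lemma CROSS_mem (D : {set 'I_(nports crossover)}) : (D \in constr crossover) = (bl D \in allowed_CROSS).
Proof.
rewrite /= !inE !memsetE.
rewrite (@bl_setE _ [set inord 0; inord 1] (fun j => (j == 0) || (j == 1))); last by move=> i; rewrite !inE !inord_eq.
rewrite (@bl_setE _ [set inord 2; inord 1] (fun j => (j == 2) || (j == 1))); last by move=> i; rewrite !inE !inord_eq.
rewrite (@bl_setE _ [set inord 0; inord 3] (fun j => (j == 0) || (j == 3))); last by move=> i; rewrite !inE !inord_eq.
rewrite (@bl_setE _ [set inord 2; inord 3] (fun j => (j == 2) || (j == 3))); last by move=> i; rewrite !inE !inord_eq.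
by rewrite /= !orbA.
Qed.
Definition ks_OR : seq kind := [:: KNOR; (KFan 2); KNOR].
Definition pt_OR : seq nat := [:: 10; 9; 3; 2; 7; 6; 5; 4; 11; 1; 0; 8].
Definition tabs_OR : seq (seq bool) := [:: [:: true; true; true; false; true; true; false; false; false; false; false; true]; [:: false; true; true; false; true; true; false; false; false; false; true; true]; [:: true; false; true; false; true; true; false; false; false; true; false; true]; [:: false; false; false; true; false; false; true; true; true; true; true; false]].
Definition st_OR : seq step := [:: SE 0; SE 1; SV 0 2; SE 3; SV 1 1; SV 1 2; SE 6; SE 7; SV 2 2; SE 11].
Definition Rr_OR : seq nat := [:: 0; 3; 6; 9].
Definition cr_OR : seq nat := [:: 0; 0; 0; 1; 1; 1; 2; 2; 2; 3; 3; 3].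
Definition kr_OR : seq nat := [:: 0; 2; 1; 0; 2; 1; 0; 2; 1; 0; 2; 1].
Definition Rf_OR : seq nat := [:: 0; 1; 2; 5].
Definition cf_OR : seq nat := [:: 0; 1; 2; 0; 2; 3; 0; 3; 2; 2; 1; 0].
Definition kf_OR : seq nat := [:: 0; 0; 0; 1; 3; 0; 2; 1; 2; 1; 1; 3].
Definition ka_OR : seq nat := [:: 0; 2; 1; 2; 4; 3; 4; 5; 4; 2; 1; 3].
Definition sel_OR : seq bool := [:: false; false; false; true; false; false; true; true; true; false; true; false].
Definition ks_AND : seq kind := [:: (KFan 2); KNOR; (KFan 2); KNOR; KNOR].
Definition pt_AND : seq nat := [:: 15; 4; 3; 2; 1; 13; 16; 10; 9; 8; 7; 12; 11; 5; 17; 0; 6; 14].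
Definition tabs_AND : seq (seq bool) := [:: [:: true; false; false; true; true; true; true; false; false; true; true; true; false; false; false; false; false; true]; [:: true; false; false; true; true; true; false; true; true; false; false; false; true; false; true; false; true; false]; [:: false; true; true; false; false; false; true; false; false; true; true; true; false; true; true; true; false; false]; [:: false; true; true; false; false; false; false; true; true; false; false; false; true; true; true; true; true; false]].
Definition st_AND : seq step := [:: SE 0; SE 6; SV 0 1; SV 0 2; SV 2 1; SV 2 2; SE 3; SE 4; SE 9; SE 10; SV 1 2; SV 3 2; SE 12; SE 13; SV 4 2; SE 17].
Definition Rr_AND : seq nat := [:: 0; 3; 6; 9; 12; 15].
Definition cr_AND : seq nat := [:: 0; 0; 0; 1; 1; 1; 2; 2; 2; 3; 3; 3; 4; 4; 4; 5; 5; 5].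
Definition kr_AND : seq nat := [:: 0; 2; 1; 0; 2; 1; 0; 2; 1; 0; 2; 1; 0; 2; 1; 0; 2; 1].
Definition Rf_AND : seq nat := [:: 0; 1; 2; 6; 8].
Definition cf_AND : seq nat := [:: 0; 1; 2; 0; 2; 1; 3; 0; 4; 3; 4; 0; 3; 0; 1; 1; 0; 3].
Definition kf_AND : seq nat := [:: 0; 0; 0; 1; 1; 3; 0; 4; 0; 1; 1; 3; 2; 2; 2; 1; 5; 3].
Definition ka_AND : seq nat := [:: 0; 2; 1; 2; 3; 3; 4; 6; 5; 6; 7; 6; 5; 4; 3; 1; 3; 2].
Definition sel_AND : seq bool := [:: false; false; false; true; true; false; true; false; false; true; true; true; false; true; true; true; false; false].
Definition ks_CROSS : seq kind := [:: (KFan 2); (KFan 2); (KFan 2); (KFan 2); KNOR; (KFan 2); KNOR; KNOR; KNOR; (KFan 2); (KFan 2); (KFan 2); KNOR; (KFan 2); KNOR; KNOR; KNOR; (KFan 2); (KFan 2); KNOR; (KFan 2); KNOR; KNOR; KNOR].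
Definition pt_CROSS : seq nat := [:: 72; 54; 6; 73; 9; 33; 2; 19; 13; 4; 12; 21; 10; 8; 15; 14; 18; 22; 16; 7; 25; 11; 17; 24; 23; 20; 27; 26; 51; 30; 29; 43; 37; 5; 36; 45; 34; 32; 39; 38; 42; 46; 40; 31; 49; 35; 41; 48; 47; 44; 74; 28; 57; 63; 1; 67; 58; 52; 56; 60; 59; 66; 64; 53; 62; 69; 61; 55; 70; 65; 68; 75; 0; 3; 50; 71].
Definition tabs_CROSS : seq (seq bool) := [:: [:: true; false; false; true; false; false; true; false; false; true; false; false; true; true; true; false; true; true; false; true; true; true; false; true; false; false; false; true; false; false; true; false; false; true; false; false; true; true; true; false; true; true; false; true; true; true; false; true; false; false; false; true; false; false; true; false; false; true; true; true; false; true; true; true; false; true; false; true; true; false; false; false; false; false; true; true]; [:: true; false; false; false; true; true; true; false; false; false; true; true; false; true; true; false; true; true; false; true; true; false; false; false; true; false; true; false; true; true; false; true; true; false; true; true; false; false; false; true; false; false; true; false; true; false; true; true; false; false; false; false; true; true; true; false; false; false; true; true; false; true; true; false; false; false; false; true; true; true; false; true; false; true; true; false]; [:: false; true; true; true; false; false; false; true; true; true; false; false; true; false; true; false; true; true; false; false; false; true; false; true; false; true; true; false; true; true; false; true; true; true; false; false; true; false; true; false; true; true; false; false; false; true; false; true; false; true; true; false; true; true; false; true; true; false; false; false; true; false; false; false; true; true; true; false; true; false; false; false; true; false; false; true]; [:: false; true; true; false; true; true; false; true; true; false; true; true; false; false; false; true; false; false; true; false; true; false; true; true; false; false; false; true;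 false; false; true; false; false; false; true; true; false; true; true; false; true; true; false; true; true; false; false; false; true; false; true; true; false; false; false; true; true; true; false; true; false; true; true; true; false; true; false; false; false; false; true; true; true; true; false; false]].
Definition st_CROSS : seq step := [:: SE 0; SE 3; SV 0 1; SV 0 2; SV 1 1; SV 1 2; SE 6; SE 9; SE 33; SE 54; SV 2 1; SV 2 2; SV 3 1; SV 3 2; SV 11 1; SV 11 2; SV 18 1; SV 18 2; SE 12; SE 13; SE 19; SE 21; SE 36; SE 45; SE 58; SE 67; SV 4 2; SE 15; SV 5 1; SV 5 2; SE 18; SE 22; SV 6 2; SV 7 2; SE 24; SE 25; SV 8 2; SE 27; SV 9 1; SV 9 2; SE 30; SE 51; SV 10 1; SV 10 2; SV 17 1; SV 17 2; SE 37; SE 43; SE 57; SE 63; SV 12 2; SV 19 2; SE 39; SE 60; SV 13 1; SV 13 2; SV 20 1; SV 20 2; SE 42; SE 46; SE 64; SE 66; SV 14 2; SV 15 2; SV 21 2; SV 22 2; SE 48; SE 49; SE 69; SE 70; SV 16 2; SV 23 2; SE 74; SE 75].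
Definition Rr_CROSS : seq nat := [:: 0; 3; 6; 9; 12; 15; 18; 21; 24; 27; 30; 33; 36; 39; 42; 45; 48; 51; 54; 57; 60; 63; 66; 69; 72].
Definition cr_CROSS : seq nat := [:: 0; 0; 0; 1; 1; 1; 2; 2; 2; 3; 3; 3; 4; 4; 4; 5; 5; 5; 6; 6; 6; 7; 7; 7; 8; 8; 8; 9; 9; 9; 10; 10; 10; 11; 11; 11; 12; 12; 12; 13; 13; 13; 14; 14; 14; 15; 15; 15; 16; 16; 16; 17; 17; 17; 18; 18; 18; 19; 19; 19; 20; 20; 20; 21; 21; 21; 22; 22; 22; 23; 23; 23; 24; 24; 24; 24].
Definition kr_CROSS : seq nat := [:: 0; 2; 1; 0; 2; 1; 0; 2; 1; 0; 2; 1; 0; 2; 1; 0; 2; 1; 0; 2; 1; 0; 2; 1; 0; 2; 1; 0; 2; 1; 0; 2; 1; 0; 2; 1; 0; 2; 1; 0; 2; 1; 0; 2; 1; 0; 2; 1; 0; 2; 1; 0; 2; 1; 0; 2; 1; 0; 2; 1; 0; 2; 1; 0; 2; 1; 0; 2; 1; 0; 2; 1; 0; 3; 2; 1].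
Definition Rf_CROSS : seq nat := [:: 0; 1; 2; 3; 5; 8; 11; 17; 29; 32; 35; 41; 53; 56; 62].
Definition cf_CROSS : seq nat := [:: 0; 1; 2; 3; 0; 4; 0; 2; 5; 4; 0; 6; 6; 0; 5; 6; 5; 7; 7; 5; 2; 4; 6; 7; 4; 7; 2; 4; 2; 8; 4; 8; 9; 3; 4; 10; 10; 4; 9; 10; 9; 11; 11; 9; 8; 3; 10; 11; 3; 11; 8; 8; 2; 12; 2; 1; 13; 12; 2; 13; 12; 13; 14; 8; 12; 14; 14; 13; 1; 8; 14; 1; 1; 0; 3; 8].
Definition kf_CROSS : seq nat := [:: 0; 0; 0; 0; 4; 0; 1; 7; 0; 1; 3; 0; 1; 2; 3; 2; 2; 0; 1; 1; 6; 2; 3; 3; 3; 2; 5; 4; 4; 0; 5; 7; 0; 1; 7; 0; 1; 6; 3; 2; 2; 0; 1; 1; 6; 2; 3; 3; 3; 2; 5; 1; 3; 0; 1; 4; 0; 1; 2; 3; 2; 2; 0; 2; 3; 3; 1; 1; 3; 3; 2; 2; 1; 5; 4; 4].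
Definition ka_CROSS : seq nat := [:: 0; 2; 1; 5; 7; 6; 2; 4; 3; 7; 6; 8; 5; 4; 6; 7; 7; 8; 6; 5; 7; 9; 9; 10; 9; 8; 10; 10; 9; 10; 9; 8; 10; 7; 9; 8; 10; 11; 11; 10; 9; 9; 8; 7; 6; 9; 8; 7; 6; 5; 4; 8; 7; 9; 3; 5; 4; 6; 5; 7; 8; 8; 8; 8; 7; 6; 7; 6; 5; 5; 4; 3; 1; 4; 3; 2].
Definition sel_CROSS : seq bool := [:: false; false; false; true; false; false; true; false; false; false; true; false; false; true; false; true; true; false; false; true; false; true; true; false; false; true; false; false; true; true; false; true; false; true; false; false; true; true; false; false; true; true; false; false; true; true; false; true; false; false; true; false; true; false; true; false; false; false; true; false; true; true; true; false; false; true; false; true; true; false; false; true; true; false; false; false].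

Ltac chk := vm_compute; reflexivity.

Ltac finish G ks pt al tabs st Rr Rf cr cf kr kf ka sel Gmem :=
  apply: (@sim_main G ks pt al tabs st [:: 0; 1]);
  [ exact: Gmem | chk | chk
  | apply: (@planar_S _ _ _ Rr Rf (fun n => nth 0 cr n) (fun n => nth 0 cf n)
       (fun n => nth 0 kr n) (fun n => nth 0 kf n) (fun n => nth 0 ka n) sel); chk
  | chk | chk | chk | chk ].

Lemma sim_OR : planar_parsimoniously_simulates NOR_fanout OR.
Proof. finish OR ks_OR pt_OR allowed_OR tabs_OR st_OR Rr_OR Rf_OR cr_OR cf_OR kr_OR kf_OR ka_OR sel_OR OR_mem. Qed.

Lemma sim_AND : planar_parsimoniously_simulates NOR_fanout AND.
Proof. finish AND ks_AND pt_AND allowed_AND tabs_AND st_AND Rr_AND Rf_AND cr_AND cf_AND kr_AND kf_AND ka_AND sel_AND AND_mem. Qed.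

Lemma sim_CROSS : planar_parsimoniously_simulates NOR_fanout crossover.
Proof. finish crossover ks_CROSS pt_CROSS allowed_CROSS tabs_CROSS st_CROSS Rr_CROSS Rf_CROSS cr_CROSS cf_CROSS kr_CROSS kf_CROSS ka_CROSS sel_CROSS CROSS_mem. Qed.

Theorem mainTheorem14 :
  planar_parsimoniously_simulates NOR_fanout OR /\
  planar_parsimoniously_simulates NOR_fanout AND /\
  planar_parsimoniously_simulates NOR_fanout crossover.
Proof. exact: (conj sim_OR (conj sim_AND sim_CROSS)). Qed.
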